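(* (Soundness and completeness.) Let $H$ be a Hintikka tree and define, for a sentence $\varphi$ of $L$ of depth $d$, $\mathrm{prove}_H(\varphi) = \mathrm{true}$ if $\sum_{\delta^{(d)} \in \mathrm{dnf}(\varphi)} H(\delta^{(d)}) = 1$ and $\mathrm{prove}_H(\varphi) = \mathrm{false}$ otherwise. (Sound) If $H$ is reasonable, then $\mathrm{prove}_H(\varphi) = \mathrm{true}$ implies that $\varphi$ is logically valid. (Complete) If $H$ is a depth Hintikka tree, then every logically valid sentence $\varphi$ satisfies $\mathrm{prove}_H(\varphi) = \mathrm{true}$.
   Context: $L$ is a first-order language without equality with finitely many predicate symbols and no function or constant symbols (structures with empty domain allowed). For $d \in \mathbb{N}$, $\Delta^{(d)}$ is the finite set of Hintikka constituents of depth $d$ with no free variables ($\Delta^{(0)} = \{\top\}$); distinct constituents of the same depth are mutually exclusive and every sentence $\varphi$ of quantifier depth $d$ is logically equivalent to the disjunction of a set $\mathrm{dnf}(\varphi) \subseteq \Delta^{(d)}$ (its Hintikka distributive normal form); a sentence of depth $d$ is logically valid iff its dnf contains all consistent depth-$d$ constituents. A constituent is consistent iff satisfiable. A fixed decidable criterion of trivial inconsistency is given such that trivially inconsistent constituents are inconsistent. $\mathrm{expand}(1,\delta^{(d)})\subseteq\Delta^{(d+1)}$ denotes the expansions of $\delta^{(d)}$. Refinement tree: on $\Delta = \bigcup_d \Delta^{(d)}$ put an edge from each $\delta^{(d)}$ to each member of $\mathrm{expand}(1,\delta^{(d)})$, keeping a constituent lying in several depth-$d$ expansions as child of only one of them.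 A Hintikka tree is a function $H: \Delta \to [0,1]$ with $H(\delta^{(0)}) = 1$ and $H(\delta) = \sum_{\delta' \text{ child of } \delta} H(\delta')$; it is reasonable if $H(\delta) > 0$ whenever $\delta$ is not trivially inconsistent, and it is a depth Hintikka tree if $H(\delta) = 0$ for every inconsistent $\delta$. *)

(* Defs.v *)
From HB Require Import structures.
From mathcomp Require Import all_boot all_order all_algebra.
From mathcomp Require Import reals.
Unset Printing Implicit Defensive.
Import Order.TTheory GRing.Theory Num.Theory.

(** Predicate symbols form a finite type [P]; symbol [p] has arity
    [(ar p).+1] (all arities positive: no 0-ary symbols, so that the unique
    depth-0 constituent without free variables is the empty conjunction T).
    Variables are de Bruijn *levels*: variable [i] denotes the [i]-th
    element of the environment, and a quantifier binds level [size env]. *)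
Section Syntax.
Variables (P : finType) (ar : P -> nat).

Inductive form : Type :=
  | FTop | FBot
  | Atom of P & seq nat
  | Neg of form
  | And of form & form
  | Or of form & form
  | Ex of form
  | All of form.

Fixpoint wf (n : nat) (f : form) : bool :=
  match f with
  | FTop | FBot => true
  | Atom p vs => (size vs == (ar p).+1) && all (fun i => i < n) vs
  | Neg g => wf n g
  | And g h | Or g h => wf n g && wf n h
  | Ex g | All g => wf n.+1 g
  end.

Definition sentence (f : form) : bool := wf 0 f.

Fixpoint qdepth (f : form) : nat :=
  match f with
  | FTop | FBot | Atom _ _ => 0
  | Neg g => qdepth g
  | And g h | Or g h => maxn (qdepth g) (qdepth h)
  | Ex g | All g => (qdepth g).+1
  end.

(** structures (empty domain allowed) *)
Record structure : Type := Structure {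
  dom : Type;
  interp : P -> seq dom -> Prop }.

Fixpoint sat (M : structure) (env : seq (dom M)) (f : form) : Prop :=
  match f with
  | FTop => True
  | FBot => False
  | Atom p vs => interp M p (pmap (onth env) vs)
  | Neg g => ~ sat M env g
  | And g h => sat M env g /\ sat M env h
  | Or g h => sat M env g \/ sat M env h
  | Ex g => exists a : dom M, sat M (rcons env a) g
  | All g => forall a : dom M, sat M (rcons env a) g
  end.

Definition valid (f : form) : Prop := forall M : structure, sat M [::] f.

(** A constituent of depth 0 in n variables is a complete atomic description
    (a sign for each atom); a constituent of depth d+1 in n variables is a
    pair (atomic description, set S of depth-d constituents in n+1 variables),
    standing for  A /\ (/\_{c in S} Ex c) /\ All (\/_{c in S} c). *)
Definition atom (n : nat) : finType := {p : P & (ar p).+1.-tuple 'I_n}.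

Fixpoint ctype (d n : nat) {struct d} : finType :=
  match d with
  | 0 => {ffun atom n -> bool}
  | d'.+1 => ({ffun atom n -> bool} * {set ctype d' n.+1})%type
  end.

Definition bigAnd (s : seq form) : form := foldr And FTop s.
Definition bigOr (s : seq form) : form := foldr Or FBot s.

Definition atom_form n (a : atom n) : form :=
  Atom (tag a) [seq val i | i <- val (tagged a)].

Definition atomic_desc n (f : {ffun atom n -> bool}) : form :=
  bigAnd [seq (if f a then atom_form n a else Neg (atom_form n a)) | a <- enum (atom n)].

Fixpoint cform (d : nat) : forall n, ctype d n -> form :=
  match d return forall n, ctype d n -> form with
  | 0 => fun n c => atomic_desc n c
  | d'.+1 => fun n c =>
      And (atomic_desc n c.1)
        (And (bigAnd [seq Ex (cform d' n.+1 c') | c' <- enum c.2])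
             (All (bigOr [seq cform d' n.+1 c' | c' <- enum c.2])))
  end.

Definition Delta (d : nat) : finType := ctype d 0.

Definition consistent d (c : Delta d) : Prop :=
  exists M : structure, sat M [::] (cform d 0 c).

Fixpoint reduct (d : nat) : forall n, ctype d.+1 n -> ctype d n :=
  match d return forall n, ctype d.+1 n -> ctype d n with
  | 0 => fun n c => c.1
  | d'.+1 => fun n c => (c.1, [set @reduct d' n.+1 c' | c' in c.2])
  end.

Definition expand1 d (c : Delta d) : {set Delta d.+1} :=
  [set c' : Delta d.+1 | reduct d 0 c' == c].

End Syntax.

Arguments FTop {P}. Arguments FBot {P}.
Arguments sat {P} M env f.
Arguments cform {P ar d n} c.
Arguments consistent {P ar d} c.
Arguments expand1 {P ar d} c.
Arguments reduct {P ar d n} c.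


Local Open Scope ring_scope.
Section Trees.
Variables (P : finType) (ar : P -> nat) (R : realType).

Definition hintikka_tree (H : forall d, Delta P ar d -> R) : Prop :=
  [/\ forall d (c : Delta P ar d), 0 <= H d c <= 1,
      forall c : Delta P ar 0, H 0 c = 1 &
      forall d (c : Delta P ar d), H d c = \sum_(c' in expand1 c) H d.+1 c'].

Definition reasonable (triv : forall d, Delta P ar d -> bool)
  (H : forall d, Delta P ar d -> R) : Prop :=
  forall d (c : Delta P ar d), ~~ triv d c -> 0 < H d c.

Definition depth_tree (H : forall d, Delta P ar d -> R) : Prop :=
  forall d (c : Delta P ar d), ~ consistent c -> H d c = 0.

Definition is_dnf (f : form P) (D : {set Delta P ar (qdepth P f)}) : Prop :=
  forall M : structure P,
    sat M [::] f <-> exists2 c, c \in D & sat M [::] (cform c).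

Definition prove (H : forall d, Delta P ar d -> R) (f : form P)
  (D : {set Delta P ar (qdepth P f)}) : bool :=
  \sum_(c in D) H (qdepth P f) c == 1.

End Trees.

Arguments hintikka_tree {P ar R} H.
Arguments reasonable {P ar R} triv H.
Arguments depth_tree {P ar R} H.
Arguments is_dnf {P ar} f D.
Arguments prove {P ar R} H f D.

(* Main.v *)
Require Import Defs.
From HB Require Import structures.
From mathcomp Require Import all_boot all_order all_algebra.
From mathcomp Require Import reals.
From mathcomp Require Import boolp.
Import Defs.
Set Implicit Arguments.
Local Open Scope ring_scope.
Import Order.TTheory GRing.Theory Num.Theory.

Section Aux.
Variables (P : finType) (ar : P -> nat).

Lemma sat_bigAnd (M : structure P) env (T : eqType) (s : seq T) (g : T -> form P) :
  sat M env (bigAnd P [seq g x | x <- s]) <-> forall x, x \in s -> sat M env (g x).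
Proof.
elim: s => [|y s IH] /=; first by split => // _ x.
split.
- move=> [h1 /IH h2] x; rewrite inE => /orP [/eqP -> //|]; exact: h2.
- move=> h; split; first by apply: h; rewrite inE eqxx.
  by apply/IH => x xs; apply: h; rewrite inE xs orbT.
Qed.

Lemma sat_bigOr (M : structure P) env (T : eqType) (s : seq T) (g : T -> form P) :
  sat M env (bigOr P [seq g x | x <- s]) <-> exists2 x, x \in s & sat M env (g x).
Proof.
elim: s => [|y s IH] /=; first by split => // [[x]].
split.
- move=> [h|/IH [x xs hx]]; first by exists y; rewrite ?inE ?eqxx.
  by exists x; rewrite // inE xs orbT.
- move=> [x]; rewrite inE => /orP [/eqP -> h|xs hx]; first by left.
  by right; apply/IH; exists x.
Qed.

Lemma atomic_excl (M : structure P) env n (f1 f2 : {ffun atom P ar n -> bool}) :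
  sat M env (atomic_desc P ar n f1) -> sat M env (atomic_desc P ar n f2) -> f1 = f2.
Proof.
rewrite /atomic_desc => /sat_bigAnd h1 /sat_bigAnd h2.
apply/ffunP => a.
have := h1 a (mem_enum _ a); have := h2 a (mem_enum _ a).
case: (f1 a); case: (f2 a) => /= x y //; exfalso; by [apply: x | apply: y].
Qed.

Lemma excl d : forall n (M : structure P) env (c1 c2 : ctype P ar d n),
  sat M env (cform c1) -> sat M env (cform c2) -> c1 = c2.
Proof.
elim: d => [|d IH] n M env /=.
  by move=> c1 c2; apply: atomic_excl.
move=> [f1 S1] [f2 S2] /= [a1 [/sat_bigAnd e1 u1]]
  [a2 [/sat_bigAnd e2 u2]].
have -> := @atomic_excl _ _ _ _ _ a1 a2.
suff : forall S1 S2 : {set ctype P ar d n.+1},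
  (forall x, x \in enum S1 -> sat M env (Ex P (cform x))) ->
  (forall a, sat M (rcons env a) (bigOr P [seq cform x | x <- enum S2])) ->
  {subset S1 <= S2}.
  move=> key; congr pair; apply/setP => x; apply/idP/idP.
  - exact: (key S1 S2 e1 u2).
  - exact: (key S2 S1 e2 u1).
move=> T1 T2 E U x xT1.
have [a ha] : sat M env (Ex P (cform x)) by apply: E; rewrite mem_enum.
have /sat_bigOr [y yT2 hy] := U a.
by rewrite (IH _ _ _ _ _ ha hy) -mem_enum.
Qed.

Lemma exist_c d : forall n (M : structure P) env,
  exists c : ctype P ar d n, sat M env (cform c).
Proof.
have hA : forall n (M : structure P) env,
    sat M env (atomic_desc P ar n [ffun a => `[< sat M env (atom_form P ar n a) >]]).
  move=> n M env; apply/sat_bigAnd => a _; rewrite ffunE.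
  by case: asboolP.
elim: d => [|d IH] n M env /=.
  by exists [ffun a => `[< sat M env (atom_form P ar n a) >]]; apply: hA.
exists ([ffun a => `[< sat M env (atom_form P ar n a) >]],
        [set c' : ctype P ar d n.+1 | `[< exists a, sat M (rcons env a) (cform c') >]]).
split; first exact: hA.
split.
- apply/sat_bigAnd => x; rewrite mem_enum inE => /asboolP [a ha]; by exists a.
- move=> a /=; apply/sat_bigOr; have [c hc] := IH n.+1 M (rcons env a).
  by exists c => //; rewrite mem_enum inE; apply/asboolP; exists a.
Qed.

Lemma sat_reduct d : forall n (M : structure P) env (c : ctype P ar d.+1 n),
  sat M env (cform c) -> sat M env (cform (reduct c)).
Proof.
elim: d => [|d IH] n M env.
  by move=> [f S] /= [].
move=> [f S] /= [hA [/sat_bigAnd E U]].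
split => //; split.
- apply/sat_bigAnd => x; rewrite mem_enum => /imsetP [c' c'S ->].
  have [a ha] := E c' ltac:(by rewrite mem_enum).
  by exists a; apply: IH.
- move=> a; have /sat_bigOr [c' c'S hc'] := U a.
  apply/sat_bigOr; exists (reduct c'); last exact: IH.
  by rewrite mem_enum; apply/imsetP; exists c' => //; rewrite -mem_enum.
Qed.

Lemma delta0_eq (c1 c2 : Delta P ar 0) : c1 = c2.
Proof.
apply/ffunP => [[p t]]; have := tnth t ord0; by case.
Qed.

Variable (R : realType) (H : forall d, Delta P ar d -> R).
Hypothesis hH : hintikka_tree H.

Lemma sumH1 d : \sum_(c : Delta P ar d) H d c = 1.
Proof.
case: hH => _ h0 hs.
elim: d => [|d IH].
  pose c0 : Delta P ar 0 := [ffun _ => true].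
  rewrite (bigD1 c0) //= big1 ?addr0 ?h0 // => c.
  by rewrite (delta0_eq c c0) eqxx.
rewrite (partition_big (@reduct P ar d 0) predT) //= -IH.
apply: eq_bigr => c _; rewrite hs; apply: eq_bigl => c'.
by rewrite /expand1 inE.
Qed.

End Aux.

Theorem mainTheorem10 (P : finType) (ar : P -> nat)
  (triv : forall d, Delta P ar d -> bool)
  (triv_inconsistent : forall d (c : Delta P ar d), triv d c -> ~ consistent c)
  (R : realType) (H : forall d, Delta P ar d -> R)
  (hH : hintikka_tree H) :
  (reasonable triv H ->
     forall (f : form P) (D : {set Delta P ar (qdepth P f)}),
       sentence P ar f -> is_dnf f D -> prove H f D -> valid P f)
  /\
  (depth_tree H ->
     forall (f : form P) (D : {set Delta P ar (qdepth P f)}),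
       sentence P ar f -> is_dnf f D -> valid P f -> prove H f D).
Proof.
have hpos : forall d (c : Delta P ar d), 0 <= H d c.
  by case: hH => h _ _ d c; case/andP: (h d c).
have split1 : forall d (D : {set Delta P ar d}),
    \sum_(c in D) H d c + \sum_(c | c \notin D) H d c = 1.
  by move=> d D; rewrite -(sumH1 hH d) [in RHS](bigID (mem D)) /=.
split.
- move=> hR f D _ hD /eqP hp M.
  apply/hD.
  have [c hc] := @exist_c P ar (qdepth P f) 0 M [::].
  exists c => //; apply/negPn/negP => cD.
  have h0 : \sum_(c | c \notin D) H (qdepth P f) c = 0.
    by have := split1 _ D; rewrite hp -[X in _ = X](addr0 1) => /addrI.
  have := psumr_eq0P (fun c _ => hpos _ c) h0 cD.
  case: (boolP (triv _ c)) => [/triv_inconsistent hi|/hR hc0 e].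
    by move=> _; apply: hi; exists M.
  by move: hc0; rewrite e ltxx.
- move=> hd f D _ hD hv; apply/eqP.
  rewrite -(split1 _ D) [X in _ = _ + X]big1 ?addr0 // => c cD; apply: hd => [[M hM]].
  have /hD [c2 c2D h2] := hv M.
  by move: cD; rewrite (@excl P ar _ _ _ _ _ _ hM h2) c2D.
Qed.
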